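(* (a) The minimal Lagrangian fibres of a cohomogeneity-1 toric Kähler metric on $\mathbb{CP}^2$ sit above the diagonal $\triangle=\{x_1=x_2\}$ in the standard simplex $P$. (b) A cohomogeneity-1 toric Kähler metric on $\mathbb{CP}^2$ which is analytic admits a finite set of minimal Lagrangian fibres. (c) There is a (non-analytic) cohomogeneity-1 toric Kähler metric on $\mathbb{CP}^2$ which admits a continuum of minimal Lagrangian fibres. (d) Given a finite subset $\{p_1,\dots,p_k\}\subset \mathrm{int}\, P\cap \triangle$, there is a cohomogeneity-1 toric Kähler metric on $\mathbb{CP}^2$ whose set of minimal Lagrangian fibres is precisely (the set of fibres over) $\{p_1,\dots,p_k\}$.
   Context: $\mathbb{CP}^2$ is regarded as a toric manifold with moment map $\mu$ whose moment polytope is the standard simplex $P=\{x\in\mathbb{R}^2: l_i(x)\ge 0\}$, with $l_1(x)=x_1$, $l_2(x)=x_2$, $l_3(x)=1-x_1-x_2$. Toric Kähler metrics are described in action-angle coordinates $(x,\theta)$ by a symplectic potential $u$ on $P$, with $g=u_{ij}\,dx^i dx^j+u^{ij}\,d\theta^i d\theta^j$, where $u_{ij}=\partial^2 u/\partial x^i\partial x^j$ and $(u^{ij})$ is its inverse; $u-u_G$ is smooth on a neighbourhood of $P$, where $u_G=\tfrac12\sum_i(l_i\log l_i-l_i)$ is the Guillemin potential. A cohomogeneity-1 toric Kähler metric on $\mathbb{CP}^2$ is one whose symplectic potential has the form $u(x)=u_G(x)+\tfrac12 f(x_1+x_2)$ for a function $f$ of one variable (positivity of the Hessian amounts to $f''(t)>-\frac{1}{t(t-1)}$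 for $0<t<1$). A fibre $\mu^{-1}(x)$, $x\in\mathrm{int}\,P$, is a minimal Lagrangian torus if and only if $x$ is a critical point of the orbital volume function $V=(\det \mathrm{Hess}(u))^{-1/2}$ (equivalently of $\log\det\mathrm{Hess}(u)$); ''minimal Lagrangian fibres'' refers to such fibres. *)

(* Defs.v *)
From Stdlib Require Import Reals Lra List.
From Coquelicot Require Import Coquelicot.
Open Scope R_scope.

Definition l1 (x : R * R) : R := fst x.
Definition l2 (x : R * R) : R := snd x.
Definition l3 (x : R * R) : R := 1 - fst x - snd x.

Definition int_simplex (x : R * R) : Prop := 0 < l1 x /\ 0 < l2 x /\ 0 < l3 x.

Definition on_diagonal (x : R * R) : Prop := fst x = snd x.

Definition uG (x : R * R) : R :=
  / 2 * ((l1 x * ln (l1 x) - l1 x) + (l2 x * ln (l2 x) - l2 x)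
         + (l3 x * ln (l3 x) - l3 x)).

Definition upot (f : R -> R) (x : R * R) : R :=
  uG x + / 2 * f (fst x + snd x).

Definition d11 (u : R * R -> R) (x : R * R) : R :=
  Derive (fun s => Derive (fun r => u (r, snd x)) s) (fst x).
Definition d22 (u : R * R -> R) (x : R * R) : R :=
  Derive (fun s => Derive (fun r => u (fst x, r)) s) (snd x).
Definition d12 (u : R * R -> R) (x : R * R) : R :=
  Derive (fun s => Derive (fun r => u (r, s)) (fst x)) (snd x).
Definition d21 (u : R * R -> R) (x : R * R) : R :=
  Derive (fun s => Derive (fun r => u (s, r)) (snd x)) (fst x).

Definition hess_posdef (u : R * R -> R) (x : R * R) : Prop :=
  forall v1 v2 : R, (v1, v2) <> (0, 0) ->
    0 < d11 u x * v1 * v1 + d12 u x * v1 * v2 + d21 u x * v2 * v1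
        + d22 u x * v2 * v2.

Definition det_hess (u : R * R -> R) (x : R * R) : R :=
  d11 u x * d22 u x - d12 u x * d21 u x.

Definition orbital_volume (u : R * R -> R) (x : R * R) : R :=
  / sqrt (det_hess u x).

Definition smooth_on (f : R -> R) (a b : R) : Prop :=
  forall (n : nat) (t : R), a < t < b -> ex_derive_n f n t.

Definition analytic_on (f : R -> R) (a b : R) : Prop :=
  forall t : R, a < t < b ->
    exists r : R, 0 < r /\ exists c : nat -> R,
      forall y : R, Rabs (y - t) < r -> is_pseries c (y - t) (f y).

(* f defines a cohomogeneity-1 toric Kahler metric on CP^2:
   u - u_G = f(x1+x2)/2 is smooth on a neighbourhood of P (equivalently f is
   smooth on a neighbourhood of [0,1]) and Hess(u) is positive definite
   on the interior of P. *)
Definition coh1_metric (f : R -> R) : Prop :=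
  (exists eps : R, 0 < eps /\ smooth_on f (- eps) (1 + eps)) /\
  (forall x : R * R, int_simplex x -> hess_posdef (upot f) x).

Definition coh1_analytic (f : R -> R) : Prop :=
  exists eps : R, 0 < eps /\ analytic_on f (- eps) (1 + eps).

(* The fibre over x in int P is minimal Lagrangian iff x is a critical point
   of the orbital volume function V (Frechet derivative zero at x). *)
Definition minimal_fibre (f : R -> R) (x : R * R) : Prop :=
  int_simplex x /\
  filterdiff (orbital_volume (upot f)) (locally x) (fun _ : R * R => 0).

(* Main.v *)
Require Import Defs.
From Stdlib Require Import Reals Lra Lia List Classical FinFun.
From Coquelicot Require Import Coquelicot.
Open Scope R_scope.

Definition E (j : nat) (x : R) : R := if Rlt_dec 0 x then (/x)^j * exp (- / x) else 0.

Lemma E_pos j x : 0 < x -> E j x = (/x)^j * exp (- / x).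
Proof. intros H; unfold E; destruct (Rlt_dec 0 x); [reflexivity|lra]. Qed.
Lemma E_neg j x : x <= 0 -> E j x = 0.
Proof. intros H; unfold E; destruct (Rlt_dec 0 x); [lra|reflexivity]. Qed.
Lemma E_ge0 j x : 0 <= E j x.
Proof. unfold E; destruct (Rlt_dec 0 x). 
  apply Rmult_le_pos; [apply pow_le; left; apply Rinv_0_lt_compat; lra| left; apply exp_pos]. lra. Qed.

Lemma exp_ge_pow (y : R) (m : nat) : 0 <= y -> y ^ m / INR (Factorial.fact m) <= exp y.
Proof.
  intros Hy. eapply Rle_trans; [|apply (exp_ge_taylor y m Hy)].
  destruct m. simpl. lra.
  rewrite tech5. assert (0 <= sum_f_R0 (fun k : nat => y ^ k / INR (Factorial.fact k)) m).
  { apply cond_pos_sum. intros n. apply Rmult_le_pos. apply pow_le; lra.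
    left; apply Rinv_0_lt_compat, INR_fact_lt_0. }
  lra.
Qed.

Lemma pow_exp_bound (j : nat) (y : R) : 0 < y -> y ^ j * exp (- y) <= INR (Factorial.fact (S j)) / y.
Proof.
  intros Hy. pose proof (exp_ge_pow y (S j) (Rlt_le _ _ Hy)) as H.
  set (F := INR (Factorial.fact (S j))) in *.
  assert (Hf : 0 < F) by apply INR_fact_lt_0.
  pose proof (exp_pos y) as He.
  rewrite exp_Ropp.
  assert (Hyj : 0 < y ^ j) by (apply pow_lt; lra).
  replace (y ^ S j) with (y * y ^ j) in H by reflexivity.
  assert (H2 : y * y ^ j <= F * exp y).
  { apply (Rmult_le_reg_r (/ F)). apply Rinv_0_lt_compat; lra.
    replace (F * exp y * / F) with (exp y) by (field; lra). exact H. }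
  apply (Rmult_le_reg_r (exp y * y)). apply Rmult_lt_0_compat; lra.
  replace (y ^ j * / exp y * (exp y * y)) with (y * y^j) by (field; lra).
  replace (F / y * (exp y * y)) with (F * exp y) by (field; lra). exact H2.
Qed.

Lemma E_lim (j : nat) (eps : R) : 0 < eps -> exists d, 0 < d /\ forall h, 0 < h < d -> Rabs (E j h) < eps.
Proof.
  intros He. pose proof (INR_fact_lt_0 (S j)) as Hf.
  exists (eps / INR (Factorial.fact (S j))). split. apply Rdiv_lt_0_compat; lra.
  intros h Hh. rewrite E_pos by lra. rewrite Rabs_pos_eq.
  2:{ apply Rmult_le_pos. apply pow_le; left; apply Rinv_0_lt_compat; lra. left; apply exp_pos. }
  assert (Hy : 0 < / h) by (apply Rinv_0_lt_compat; lra).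
  eapply Rle_lt_trans. apply (pow_exp_bound j (/h) Hy).
  set (F := INR (Factorial.fact (S j))) in *.
  destruct Hh as [H1 H2].
  replace (F / / h) with (F * h) by (field; lra).
  apply (Rmult_lt_reg_r (/ F)). apply Rinv_0_lt_compat; lra.
  replace (F * h * / F) with h by (field; lra).
  replace (eps * / F) with (eps / F) by reflexivity. lra.
Qed.

Lemma loc_int (a b x : R) : a < x < b -> locally x (fun t => a < t < b).
Proof.
  intros H. apply (open_and (fun t => a < t) (fun t => t < b)).
  apply open_gt. apply open_lt. exact H.
Qed.
Lemma loc_gt (a x : R) : a < x -> locally x (fun t => a < t).
Proof. intros H. apply open_gt. exact H. Qed.
Lemma loc_lt (b x : R) : x < b -> locally x (fun t => t < b).
Proof. intros H. apply open_lt. exact H. Qed.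

Lemma E_derive (j : nat) (x : R) :
  is_derive (E j) x (- INR j * E (S j) x + E (S (S j)) x).
Proof.
  destruct (Rlt_dec 0 x) as [Hx|Hx].
  - rewrite !E_pos by lra.
    apply is_derive_ext_loc with (f := fun x => (/x)^j * exp (- / x)).
    { eapply filter_imp; [|apply (loc_gt 0 x Hx)]. intros t Ht. simpl. rewrite E_pos by lra. reflexivity. }
    auto_derive. repeat split; lra.
    destruct j.
    + simpl. field. lra.
    + simpl pred. simpl pow. field. lra.
  - destruct (Rlt_dec x 0) as [Hx'|Hx'].
    + rewrite !E_neg by lra.
      apply is_derive_ext_loc with (f := fun _ => 0).
      { eapply filter_imp; [|apply (loc_lt 0 x Hx')]. intros t Ht. simpl. rewrite E_neg by lra. reflexivity. }
      replace (- INR j * 0 + 0) with 0 by ring. auto_derive; auto.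
    + assert (x = 0) by lra. subst x. rewrite !E_neg by lra.
      replace (- INR j * 0 + 0) with 0 by ring.
      apply is_derive_Reals. intros eps Heps.
      destruct (E_lim (S j) eps Heps) as [d [Hd Hd']].
      exists (mkposreal d Hd). intros h Hh0 Hh. simpl in Hh.
      rewrite Rplus_0_l, (E_neg j 0) by lra.
      destruct (Rlt_dec 0 h) as [Hp|Hp].
      * rewrite E_pos by lra. specialize (Hd' h). rewrite E_pos in Hd' by lra.
        replace (((/ h) ^ j * exp (- / h) - 0) / h - 0) with ((/ h) ^ S j * exp (- / h)).
        apply Hd'. split; [lra| apply Rabs_def2 in Hh; lra].
        simpl. field. lra.
      * rewrite E_neg by lra. replace ((0 - 0) / h - 0) with 0 by (field; lra).
        rewrite Rabs_R0. lra.
Qed.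

Inductive Cl : (R -> R) -> Prop :=
| Cl_const c : Cl (fun _ => c)
| Cl_id : Cl (fun x => x)
| Cl_plus f g : Cl f -> Cl g -> Cl (fun x => f x + g x)
| Cl_mult f g : Cl f -> Cl g -> Cl (fun x => f x * g x)
| Cl_E j : Cl (E j)
| Cl_aff f a b : Cl f -> Cl (fun x => f (a*x+b))
| Cl_inv f : Cl f -> (forall x, f x <> 0) -> Cl (fun x => / f x)
| Cl_int f : Cl f -> Cl (fun x => RInt f 0 x)
| Cl_ext f g : Cl f -> (forall x, f x = g x) -> Cl g.

Lemma Cl_der f : Cl f -> exists f', Cl f' /\ forall x, is_derive f x (f' x).
Proof.
  induction 1.
  - exists (fun _ => 0). split. constructor. intros x. auto_derive; auto.
  - exists (fun _ => 1). split. constructor. intros x. auto_derive; auto.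
  - destruct IHCl1 as [f' [Hf Df]]. destruct IHCl2 as [g' [Hg Dg]].
    exists (fun x => f' x + g' x). split. now constructor.
    intros x. apply (is_derive_plus f g); auto.
  - destruct IHCl1 as [f' [Hf Df]]. destruct IHCl2 as [g' [Hg Dg]].
    exists (fun x => f' x * g x + f x * g' x). split.
    apply Cl_plus; apply Cl_mult; auto.
    intros x. apply (is_derive_mult f g); auto. intros; apply Rmult_comm.
  - exists (fun x => - INR j * E (S j) x + E (S (S j)) x). split.
    apply Cl_plus. apply Cl_mult. apply Cl_const. apply Cl_E. apply Cl_E.
    intros x. apply E_derive.
  - destruct IHCl as [f' [Hf Df]].
    exists (fun x => a * f' (a*x+b)). split.
    apply Cl_mult. apply Cl_const. now apply Cl_aff.
    intros x. apply (is_derive_comp f (fun x => a*x+b)). apply Df.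
    auto_derive; auto; ring.
  - destruct IHCl as [f' [Hf Df]].
    exists (fun x => (-1 * f' x) * (/ f x * / f x)). split.
    apply Cl_mult. apply Cl_mult. apply Cl_const. exact Hf.
    apply Cl_mult; apply Cl_inv; auto.
    intros x. replace ((-1 * f' x) * (/ f x * / f x)) with (- f' x / f x ^ 2).
    apply is_derive_inv; auto. field. auto.
  - destruct IHCl as [f' [Hf Df]].
    exists f. split. assumption.
    intros x. apply (is_derive_RInt f (fun x => RInt f 0 x) 0 x).
    + apply filter_forall. intros b0. apply (RInt_correct (V:=R_CompleteNormedModule)). apply (ex_RInt_continuous (V:=R_CompleteNormedModule)).
      intros z _. apply (ex_derive_continuous (V:=R_NormedModule)). eexists; apply Df.
    + apply (ex_derive_continuous (V:=R_NormedModule)). eexists; apply Df.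
  - destruct IHCl as [f' [Hf Df]]. exists f'. split; auto.
    intros x. apply is_derive_ext with f; auto.
Qed.

Lemma Cl_Derive_n (n : nat) : forall f, Cl f -> exists g, Cl g /\ forall x, Derive_n f n x = g x.
Proof.
  induction n; intros f Hf.
  - exists f. split; auto.
  - destruct (IHn f Hf) as [g [Hg Eg]].
    destruct (Cl_der g Hg) as [g' [Hg' Dg]].
    exists g'. split; auto. intros x. simpl.
    rewrite (Derive_ext _ _ x Eg). apply is_derive_unique, Dg.
Qed.

Lemma Cl_smooth f : Cl f -> forall n x, ex_derive_n f n x.
Proof.
  intros Hf n x. destruct n. simpl; auto.
  simpl. destruct (Cl_Derive_n n f Hf) as [g [Hg Eg]].
  destruct (Cl_der g Hg) as [g' [_ Dg]].
  apply ex_derive_ext with g. intros; symmetry; auto. eexists; apply Dg.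
Qed.

Lemma Cl_cont f : Cl f -> forall x, continuous f x.
Proof.
  intros Hf x. destruct (Cl_der f Hf) as [f' [_ Df]]. apply (ex_derive_continuous (V:=R_NormedModule)). eexists; apply Df.
Qed.

Definition St (x : R) : R := E 0 x * / (E 0 x + E 0 (-1 * x + 1)).

Lemma St_den x : 0 < E 0 x + E 0 (-1 * x + 1).
Proof.
  destruct (Rlt_dec 0 x).
  - rewrite (E_pos 0 x) by lra. pose proof (exp_pos (- / x)). pose proof (E_ge0 0 (-1*x+1)). simpl; lra.
  - rewrite (E_pos 0 (-1*x+1)) by lra. pose proof (exp_pos (- / (-1*x+1))). pose proof (E_ge0 0 x). simpl; lra.
Qed.

Lemma Cl_St : Cl St.
Proof.
  unfold St. apply Cl_mult. apply Cl_E. apply Cl_inv.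
  apply Cl_plus. apply Cl_E. apply Cl_aff. apply Cl_E.
  intros x. pose proof (St_den x). lra.
Qed.

Lemma St_0 x : x <= 0 -> St x = 0.
Proof. intros H. unfold St. rewrite (E_neg 0 x H). ring. Qed.
Lemma St_1 x : 1 <= x -> St x = 1.
Proof. intros H. pose proof (St_den x). unfold St in *. rewrite (E_neg 0 (-1*x+1)) in * by lra.
  field. lra. Qed.
Lemma St_bnd x : 0 <= St x <= 1.
Proof. pose proof (St_den x). pose proof (E_ge0 0 x). pose proof (E_ge0 0 (-1*x+1)). unfold St.
  split. apply Rmult_le_pos; auto. left; apply Rinv_0_lt_compat; auto.
  apply (Rmult_le_reg_r (E 0 x + E 0 (-1 * x + 1))); auto.
  rewrite Rmult_assoc, Rinv_l by lra. lra.
Qed.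

Definition Bm (a0 a1 b1 b0 t : R) : R :=
  St (/(a1-a0) * t + - a0/(a1-a0)) * St (- /(b0-b1) * t + b0/(b0-b1)).

Lemma Cl_Bm a0 a1 b1 b0 : Cl (Bm a0 a1 b1 b0).
Proof. unfold Bm. apply Cl_mult; apply Cl_aff; apply Cl_St. Qed.

Lemma Bm_bnd a0 a1 b1 b0 t : 0 <= Bm a0 a1 b1 b0 t <= 1.
Proof. unfold Bm. destruct (St_bnd (/(a1-a0) * t + - a0/(a1-a0))). destruct (St_bnd (- /(b0-b1) * t + b0/(b0-b1))).
  split. apply Rmult_le_pos; auto. rewrite <- (Rmult_1_r 1). apply Rmult_le_compat; auto. Qed.

Lemma Bm_1 a0 a1 b1 b0 t : a0 < a1 -> b1 < b0 -> a1 <= t <= b1 -> Bm a0 a1 b1 b0 t = 1.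
Proof. intros H1 H2 Ht. unfold Bm. rewrite !St_1. ring.
  - apply (Rmult_le_reg_r (b0 - b1)). lra. field_simplify; lra.
  - apply (Rmult_le_reg_r (a1 - a0)). lra. field_simplify; lra.
Qed.

Lemma Bm_0 a0 a1 b1 b0 t : a0 < a1 -> b1 < b0 -> (t <= a0 \/ b0 <= t) -> Bm a0 a1 b1 b0 t = 0.
Proof. intros H1 H2 [Ht|Ht]; unfold Bm.
  - rewrite (St_0 (/(a1-a0) * t + - a0/(a1-a0))). ring.
    apply (Rmult_le_reg_r (a1 - a0)). lra. field_simplify; lra.
  - rewrite (St_0 (- /(b0-b1) * t + b0/(b0-b1))). ring.
    apply (Rmult_le_reg_r (b0 - b1)). lra. field_simplify; lra.
Qed.


Lemma Der_eta (f : R -> R) x l : is_derive f x l -> Derive (fun y => f y) x = l.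
Proof. intros H. apply is_derive_unique. exact H. Qed.

Definition derivs (f f1 f2 f3 : R -> R) : Prop :=
  forall t, 0 < t < 1 -> is_derive f t (f1 t) /\ is_derive f1 t (f2 t) /\ is_derive f2 t (f3 t).

Lemma inner1 f f1 f2 f3 r s : derivs f f1 f2 f3 -> 0 < r -> 0 < s -> r + s < 1 ->
  is_derive (fun r' => upot f (r', s)) r ((ln r - ln (1-r-s))/2 + f1 (r+s)/2).
Proof.
  intros D Hr Hs Hrs. destruct (D (r+s)) as [H1 _]. lra.
  unfold upot, uG, l1, l2, l3; simpl fst; simpl snd. auto_derive.
  - repeat split; try lra. eexists; exact H1.
  - rewrite (Der_eta _ _ _ H1). replace (1 + - r + - s) with (1 - r - s) by ring.
    change RinvImpl.Rinv with Rinv. field. split; lra.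
Qed.

Lemma inner2 f f1 f2 f3 r s : derivs f f1 f2 f3 -> 0 < r -> 0 < s -> r + s < 1 ->
  is_derive (fun r' => upot f (s, r')) r ((ln r - ln (1-s-r))/2 + f1 (s+r)/2).
Proof.
  intros D Hr Hs Hrs. destruct (D (s+r)) as [H1 _]. lra.
  unfold upot, uG, l1, l2, l3; simpl fst; simpl snd. auto_derive.
  - repeat split; try lra. eexists; exact H1.
  - rewrite (Der_eta _ _ _ H1). replace (1 - s + - r) with (1 - s - r) by ring.
    change RinvImpl.Rinv with Rinv. field. split; lra.
Qed.

Lemma d11_val f f1 f2 f3 a b : derivs f f1 f2 f3 -> int_simplex (a, b) ->
  d11 (upot f) (a, b) = (/a + /(1-a-b) + f2 (a+b)) / 2.
Proof.
  intros D [Ha [Hb Hc]]. unfold l1, l2, l3 in *; simpl in *. unfold d11; simpl fst; simpl snd.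
  rewrite (Derive_ext_loc _ (fun s => (ln s - ln (1-s-b))/2 + f1 (s+b)/2)).
  - destruct (D (a+b)) as [_ [H2 _]]. lra. apply is_derive_unique. auto_derive.
    + repeat split; try lra. eexists; exact H2.
    + rewrite (Der_eta _ _ _ H2). replace (1 + - a + - b) with (1 - a - b) by ring. change RinvImpl.Rinv with Rinv. field. lra.
  - eapply filter_imp; [|apply (loc_int 0 (1-b) a); lra]. intros s Hs. simpl.
    apply is_derive_unique. apply (inner1 f f1 f2 f3); auto; lra.
Qed.

Lemma d22_val f f1 f2 f3 a b : derivs f f1 f2 f3 -> int_simplex (a, b) ->
  d22 (upot f) (a, b) = (/b + /(1-a-b) + f2 (a+b)) / 2.
Proof.
  intros D [Ha [Hb Hc]]. unfold l1, l2, l3 in *; simpl in *. unfold d22; simpl fst; simpl snd.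
  rewrite (Derive_ext_loc _ (fun s => (ln s - ln (1-a-s))/2 + f1 (a+s)/2)).
  - destruct (D (a+b)) as [_ [H2 _]]. lra. apply is_derive_unique. auto_derive.
    + repeat split; try lra. eexists; exact H2.
    + rewrite (Der_eta _ _ _ H2). replace (1 + - a + - b) with (1 - a - b) by ring. change RinvImpl.Rinv with Rinv. field. lra.
  - eapply filter_imp; [|apply (loc_int 0 (1-a) b); lra]. intros s Hs. simpl.
    apply is_derive_unique. apply (inner2 f f1 f2 f3); auto; lra.
Qed.

Lemma d12_val f f1 f2 f3 a b : derivs f f1 f2 f3 -> int_simplex (a, b) ->
  d12 (upot f) (a, b) = (/(1-a-b) + f2 (a+b)) / 2.
Proof.
  intros D [Ha [Hb Hc]]. unfold l1, l2, l3 in *; simpl in *. unfold d12; simpl fst; simpl snd.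
  rewrite (Derive_ext_loc _ (fun s => (ln a - ln (1-a-s))/2 + f1 (a+s)/2)).
  - destruct (D (a+b)) as [_ [H2 _]]. lra. apply is_derive_unique. auto_derive.
    + repeat split; try lra. eexists; exact H2.
    + rewrite (Der_eta _ _ _ H2). replace (1 + - a + - b) with (1 - a - b) by ring. change RinvImpl.Rinv with Rinv. field. lra.
  - eapply filter_imp; [|apply (loc_int 0 (1-a) b); lra]. intros s Hs. simpl.
    apply is_derive_unique. apply (inner1 f f1 f2 f3); auto; lra.
Qed.

Lemma d21_val f f1 f2 f3 a b : derivs f f1 f2 f3 -> int_simplex (a, b) ->
  d21 (upot f) (a, b) = (/(1-a-b) + f2 (a+b)) / 2.
Proof.
  intros D [Ha [Hb Hc]]. unfold l1, l2, l3 in *; simpl in *. unfold d21; simpl fst; simpl snd.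
  rewrite (Derive_ext_loc _ (fun s => (ln b - ln (1-s-b))/2 + f1 (s+b)/2)).
  - destruct (D (a+b)) as [_ [H2 _]]. lra. apply is_derive_unique. auto_derive.
    + repeat split; try lra. eexists; exact H2.
    + rewrite (Der_eta _ _ _ H2). replace (1 + - a + - b) with (1 - a - b) by ring. change RinvImpl.Rinv with Rinv. field. lra.
  - eapply filter_imp; [|apply (loc_int 0 (1-b) a); lra]. intros s Hs. simpl.
    apply is_derive_unique. apply (inner2 f f1 f2 f3); auto; lra.
Qed.

Definition Kf (f2 : R -> R) (t : R) : R := 1 + t * (/(1-t) + f2 t).
Definition Kd (f2 f3 : R -> R) (t : R) : R := /((1-t)*(1-t)) + f2 t + t * f3 t.

Lemma det_val f f1 f2 f3 a b : derivs f f1 f2 f3 -> int_simplex (a, b) ->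
  det_hess (upot f) (a, b) = Kf f2 (a+b) / (4*a*b).
Proof.
  intros D H. unfold det_hess. rewrite (d11_val f f1 f2 f3), (d22_val f f1 f2 f3), (d12_val f f1 f2 f3), (d21_val f f1 f2 f3); auto.
  destruct H as [Ha [Hb Hc]]. unfold l1,l2,l3 in *; simpl in *. unfold Kf. field. repeat split; lra.
Qed.

Lemma pow2_pos z : z <> 0 -> 0 < z ^ 2.
Proof. intros H. replace (z^2) with (Rsqr z) by (unfold Rsqr; ring). apply Rsqr_pos_lt; auto. Qed.

Lemma posdef_iff f f1 f2 f3 a b : derivs f f1 f2 f3 -> int_simplex (a, b) ->
  (hess_posdef (upot f) (a, b) <-> 0 < Kf f2 (a+b)).
Proof.
  intros D H. unfold hess_posdef.
  rewrite (d11_val f f1 f2 f3), (d22_val f f1 f2 f3), (d12_val f f1 f2 f3), (d21_val f f1 f2 f3); auto.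
  destruct H as [Ha [Hb Hc]]. unfold l1,l2,l3 in *; simpl in *. split.
  - intros P. specialize (P a b). 
    assert (Hne : (a, b) <> (0, 0)). { intros E; injection E; intros; lra. }
    specialize (P Hne).
    assert (E : (/ a + / (1 - a - b) + f2 (a + b)) / 2 * a * a + (/ (1 - a - b) + f2 (a + b)) / 2 * a * b +
     (/ (1 - a - b) + f2 (a + b)) / 2 * b * a + (/ b + / (1 - a - b) + f2 (a + b)) / 2 * b * b
     = (a+b) * Kf f2 (a+b) / 2). { unfold Kf. field. lra. }
    rewrite E in P. assert (0 < (a+b) * Kf f2 (a+b)) by lra.
    destruct (Rlt_or_le 0 (Kf f2 (a+b))); auto. nra.
  - intros K v1 v2 Hv.
    set (Q := (/ a + / (1 - a - b) + f2 (a + b)) / 2 * v1 * v1 + (/ (1 - a - b) + f2 (a + b)) / 2 * v1 * v2 +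
     (/ (1 - a - b) + f2 (a + b)) / 2 * v2 * v1 + (/ b + / (1 - a - b) + f2 (a + b)) / 2 * v2 * v2).
    assert (E : 2 * Q = (v1 * b - v2 * a)^2 / (a*b*(a+b)) + Kf f2 (a+b) * (v1+v2)^2 / (a+b)).
    { unfold Q, Kf. field. repeat split; lra. }
    assert (Hab : 0 < a*b*(a+b)) by (apply Rmult_lt_0_compat; [apply Rmult_lt_0_compat|]; lra).
    assert (T1 : 0 <= (v1 * b - v2 * a)^2 / (a*b*(a+b))).
    { apply Rmult_le_pos. apply pow2_ge_0. left; apply Rinv_0_lt_compat; auto. }
    assert (T2 : 0 <= Kf f2 (a+b) * (v1+v2)^2 / (a+b)).
    { apply Rmult_le_pos. apply Rmult_le_pos. lra. apply pow2_ge_0. left; apply Rinv_0_lt_compat; lra. }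
    destruct (Req_dec (v1 + v2) 0) as [Hs|Hs].
    + assert (v1 <> 0). { intros E0. apply Hv. f_equal; lra. }
      assert (0 < (v1 * b - v2 * a)^2 / (a*b*(a+b))).
      { apply Rdiv_lt_0_compat; auto. replace (v1 * b - v2 * a) with (v1 * (a+b)) by (replace v2 with (-v1) by lra; ring).
        apply pow2_pos. intros E0. apply Rmult_integral in E0. lra. }
      lra.
    + assert (0 < Kf f2 (a+b) * (v1+v2)^2 / (a+b)).
      { apply Rdiv_lt_0_compat; [|lra]. apply Rmult_lt_0_compat; auto. apply pow2_pos; auto. }
      lra.
Qed.

Lemma loc_simplex (x : R * R) : int_simplex x -> locally x int_simplex.
Proof.
  destruct x as [a b]. intros [Ha [Hb Hc]]. unfold l1,l2,l3 in *; simpl in *.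
  set (e := Rmin (Rmin a b) (1-a-b) / 3).
  assert (He : 0 < e). { unfold e. apply Rdiv_lt_0_compat; [|lra]. repeat apply Rmin_glb_lt; lra. }
  assert (e1 : e <= a / 3). { unfold e. pose proof (Rmin_l (Rmin a b) (1-a-b)). pose proof (Rmin_l a b). lra. }
  assert (e2 : e <= b / 3). { unfold e. pose proof (Rmin_l (Rmin a b) (1-a-b)). pose proof (Rmin_r a b). lra. }
  assert (e3 : e <= (1-a-b) / 3). { unfold e. pose proof (Rmin_r (Rmin a b) (1-a-b)). lra. }
  exists (mkposreal e He). intros [y1 y2] [H1 H2]. simpl in *.
  unfold ball in H1, H2; simpl in H1, H2. unfold AbsRing_ball, abs, minus, plus, opp in H1, H2; simpl in H1, H2.
  apply Rabs_def2 in H1. apply Rabs_def2 in H2.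
  unfold int_simplex, l1, l2, l3; simpl. lra.
Qed.

Lemma Kf_der f f1 f2 f3 t : derivs f f1 f2 f3 -> 0 < t < 1 -> is_derive (Kf f2) t (Kd f2 f3 t).
Proof.
  intros D Ht. destruct (D t Ht) as [_ [_ H3]]. unfold Kf, Kd.
  auto_derive. split; [lra|]. split; [eexists; exact H3|auto].
  rewrite (Der_eta _ _ _ H3). change RinvImpl.Rinv with Rinv. field. lra.
Qed.

Lemma G_der z : 0 < z -> is_derive (fun z => / sqrt z) z (- / (2 * z * sqrt z)).
Proof.
  intros Hz. pose proof (sqrt_lt_R0 z Hz). pose proof (sqrt_sqrt z (Rlt_le _ _ Hz)).
  auto_derive. split; auto. lra.
  change RinvImpl.Rinv with Rinv. rewrite H0. field. lra.
Qed.

Lemma Q1_der f f1 f2 f3 a b : derivs f f1 f2 f3 -> 0 < a -> 0 < b -> a + b < 1 ->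
  is_derive (fun r => Kf f2 (r + b) / (4*r*b)) a ((Kd f2 f3 (a+b) * a - Kf f2 (a+b)) / (4*a*a*b)).
Proof.
  intros D Ha Hb Hab. pose proof (Kf_der f f1 f2 f3 (a+b) D ltac:(lra)) as HK.
  assert (Hn : 4 * a * b <> 0) by (apply Rgt_not_eq; apply Rmult_lt_0_compat; lra).
  auto_derive. repeat split; try lra; auto. eexists; exact HK.
  rewrite (Der_eta _ _ _ HK). change RinvImpl.Rinv with Rinv. field. lra.
Qed.

Lemma Q2_der f f1 f2 f3 a b : derivs f f1 f2 f3 -> 0 < a -> 0 < b -> a + b < 1 ->
  is_derive (fun r => Kf f2 (a + r) / (4*a*r)) b ((Kd f2 f3 (a+b) * b - Kf f2 (a+b)) / (4*a*b*b)).
Proof.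
  intros D Ha Hb Hab. pose proof (Kf_der f f1 f2 f3 (a+b) D ltac:(lra)) as HK.
  assert (Hn : 4 * a * b <> 0) by (apply Rgt_not_eq; apply Rmult_lt_0_compat; lra).
  auto_derive. repeat split; try lra; auto. eexists; exact HK.
  rewrite (Der_eta _ _ _ HK). change RinvImpl.Rinv with Rinv. field. lra.
Qed.

Lemma partial1 (W : R * R -> R) a b : filterdiff W (locally (a,b)) (fun _ => 0) -> is_derive (fun r => W (r,b)) a 0.
Proof.
  intros H. unfold is_derive.
  apply filterdiff_ext_lin with (fun _ => 0).
  2:{ intros y. unfold scal; simpl. unfold mult; simpl. ring. }
  apply (filterdiff_comp'_2 (fun r => r) (fun _ => b) (fun u v => W (u, v)) a (fun y => y) (fun _ => 0) (fun _ _ => 0)).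
  apply filterdiff_id. eapply filterdiff_ext_lin. apply filterdiff_const. intros; reflexivity.
  apply filterdiff_ext with W. intros [u v]; reflexivity. exact H.
Qed.

Lemma partial2 (W : R * R -> R) a b : filterdiff W (locally (a,b)) (fun _ => 0) -> is_derive (fun r => W (a,r)) b 0.
Proof.
  intros H. unfold is_derive.
  apply filterdiff_ext_lin with (fun _ => 0).
  2:{ intros y. unfold scal; simpl. unfold mult; simpl. ring. }
  apply (filterdiff_comp'_2 (fun _ => a) (fun r => r) (fun u v => W (u, v)) b (fun _ => 0) (fun y => y) (fun _ _ => 0)).
  eapply filterdiff_ext_lin. apply filterdiff_const. intros; reflexivity. apply filterdiff_id.
  apply filterdiff_ext with W. intros [u v]; reflexivity. exact H.
Qed.

Definition Wf (f2 : R -> R) (y : R * R) : R := / sqrt (Kf f2 (fst y + snd y) / (4 * fst y * snd y)).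

Lemma vol_loc f f1 f2 f3 x : derivs f f1 f2 f3 -> int_simplex x ->
  locally x (fun y => orbital_volume (upot f) y = Wf f2 y).
Proof.
  intros D Hx. eapply filter_imp; [|apply (loc_simplex x Hx)].
  intros [y1 y2] Hy. unfold orbital_volume, Wf. rewrite (det_val f f1 f2 f3); auto.
Qed.

Lemma Wf_diff f f1 f2 f3 a : derivs f f1 f2 f3 -> 0 < a -> a + a < 1 -> 0 < Kf f2 (a + a) ->
  Kf f2 (a+a) = a * Kd f2 f3 (a+a) ->
  filterdiff (Wf f2) (locally (a,a)) (fun _ => 0).
Proof.
  intros D Ha Haa HK0 Hcrit.
  assert (Hs : filterdiff (fun y : R * R => fst y + snd y) (locally (a,a)) (fun y => fst y + snd y)).
  { apply filterdiff_linear. apply (is_linear_plus (K := R_AbsRing) (V := R_NormedModule)). }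
  assert (HK := filterdiff_comp' _ _ _ _ _ Hs (Kf_der f f1 f2 f3 (a+a) D ltac:(lra))).
  assert (H4 : filterdiff (fun y : R * R => 4 * fst y) (locally (a,a)) (fun y => 4 * fst y)).
  { apply filterdiff_linear. 
    apply (is_linear_comp (fun t : R * R => fst t) (fun z : R => scal 4 z)). apply is_linear_fst.
    apply (@is_linear_scal_r R_AbsRing R_NormedModule 4). intros; apply Rmult_comm. }
  assert (H2 : filterdiff (fun y : R * R => snd y) (locally (a,a)) (fun y => snd y)).
  { apply filterdiff_linear. apply is_linear_snd. }
  assert (HP := filterdiff_mult_fct _ _ _ _ _ Rmult_comm H4 H2).
  assert (Hinv : is_derive (fun z => / z) (4 * a * a) (- / ((4*a*a)*(4*a*a)))).
  { assert (4*a*a <> 0) by (apply Rgt_not_eq; apply Rmult_lt_0_compat; [apply Rmult_lt_0_compat|]; lra).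
    auto_derive; [auto | change RinvImpl.Rinv with Rinv; field; repeat split; auto; lra]. }
  assert (HI := filterdiff_comp' _ _ _ _ _ HP Hinv).
  assert (HQ := filterdiff_mult_fct _ _ _ _ _ Rmult_comm HK HI).
  assert (HQpos : 0 < Kf f2 (a+a) * / (4 * a * a)).
  { apply Rmult_lt_0_compat; auto. apply Rinv_0_lt_compat. apply Rmult_lt_0_compat; [apply Rmult_lt_0_compat|]; lra. }
  assert (HG := filterdiff_comp' _ _ _ _ _ HQ (G_der _ HQpos)).
  eapply filterdiff_ext_lin.
  - eapply filterdiff_ext; [|exact HG]. intros y. reflexivity.
  - intros [h1 h2]. simpl. unfold scal, mult, plus; simpl. unfold mult; simpl.
    rewrite Hcrit. 
    replace ((h1 + h2) * Kd f2 f3 (a + a) * / (4 * a * a) +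
      a * Kd f2 f3 (a + a) * ((4 * h1 * a + 4 * a * h2) * - / (4 * a * a * (4 * a * a)))) with 0
      by (field; lra). ring.
Qed.

Lemma der_uniq (f g : R -> R) x l1 l2 : is_derive f x l1 -> is_derive g x l2 -> (forall y, f y = g y) -> l1 = l2.
Proof. intros H1 H2 E. apply is_derive_unique in H1. apply is_derive_unique in H2.
  rewrite <- H1, <- H2. apply Derive_ext. auto. Qed.

Lemma min_iff f f1 f2 f3 x : derivs f f1 f2 f3 -> (forall t, 0 < t < 1 -> 0 < Kf f2 t) ->
  (minimal_fibre f x <-> int_simplex x /\ fst x = snd x /\
     2 * Kf f2 (fst x + snd x) - (fst x + snd x) * Kd f2 f3 (fst x + snd x) = 0).
Proof.
  intros D Kpos. destruct x as [a b]. simpl. split.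
  - intros [Hint Hfd].
    assert (HW := filterdiff_ext_locally _ _ _ _ (vol_loc f f1 f2 f3 _ D Hint) Hfd).
    destruct Hint as [Ha [Hb Hc]]. unfold l1,l2,l3 in *; simpl in *.
    assert (HKab := Kpos (a+b) ltac:(lra)).
    assert (Hq1 : 0 < Kf f2 (a + b) / (4 * a * b)).
    { apply Rdiv_lt_0_compat; auto. apply Rmult_lt_0_compat; [apply Rmult_lt_0_compat|]; lra. }
    assert (P1 := partial1 _ _ _ HW). unfold Wf in P1; simpl in P1.
    assert (P1' := is_derive_comp (fun z => / sqrt z) (fun r => Kf f2 (r + b) / (4*r*b)) a _ _ (G_der _ Hq1) (Q1_der f f1 f2 f3 a b D Ha Hb ltac:(lra))).
    assert (P2 := partial2 _ _ _ HW). unfold Wf in P2; simpl in P2.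
    assert (P2' := is_derive_comp (fun z => / sqrt z) (fun r => Kf f2 (a + r) / (4*a*r)) b _ _ (G_der _ Hq1) (Q2_der f f1 f2 f3 a b D Ha Hb ltac:(lra))).
    assert (Q1 := der_uniq _ _ _ _ _ P1 P1' (fun y => eq_refl)). clear P1'. rename Q1 into P1'.
    assert (Q2 := der_uniq _ _ _ _ _ P2 P2' (fun y => eq_refl)). clear P2'. rename Q2 into P2'.
    unfold scal in P1', P2'; simpl in P1', P2'; unfold mult in P1', P2'; simpl in P1', P2'.
    assert (Hg : - / (2 * (Kf f2 (a + b) / (4 * a * b)) * sqrt (Kf f2 (a + b) / (4 * a * b))) <> 0).
    { apply Ropp_neq_0_compat. apply Rinv_neq_0_compat. apply Rgt_not_eq.
      apply Rmult_lt_0_compat. lra. apply sqrt_lt_R0; auto. }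
    symmetry in P1', P2'.
    apply Rmult_integral in P1'. destruct P1' as [P1'|P1']; [|contradiction].
    apply Rmult_integral in P2'. destruct P2' as [P2'|P2']; [|contradiction].
    assert (E1 : Kd f2 f3 (a + b) * a - Kf f2 (a + b) = 0).
    { unfold Rdiv in P1'. apply Rmult_integral in P1'. destruct P1' as [P1'|P1']; auto.
      exfalso. revert P1'. apply Rinv_neq_0_compat. apply Rgt_not_eq. 
      apply Rmult_lt_0_compat; [apply Rmult_lt_0_compat; [apply Rmult_lt_0_compat|]|]; lra. }
    assert (E2 : Kd f2 f3 (a + b) * b - Kf f2 (a + b) = 0).
    { unfold Rdiv in P2'. apply Rmult_integral in P2'. destruct P2' as [P2'|P2']; auto.
      exfalso. revert P2'. apply Rinv_neq_0_compat. apply Rgt_not_eq. 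
      apply Rmult_lt_0_compat; [apply Rmult_lt_0_compat; [apply Rmult_lt_0_compat|]|]; lra. }
    assert (Hab : a = b).
    { assert (Kd f2 f3 (a+b) * (a - b) = 0) by lra.
      apply Rmult_integral in H. destruct H; [|lra]. rewrite H in E1. lra. }
    split. unfold int_simplex, l1,l2,l3; simpl; lra. split; auto. lra.
  - intros [Hint [Hab Hcrit]]. split; auto. subst b.
    destruct Hint as [Ha [Hb Hc]]. unfold l1,l2,l3 in *; simpl in *.
    apply filterdiff_ext_locally with (Wf f2).
    + eapply filter_imp; [|apply (vol_loc f f1 f2 f3 (a,a) D)]. intros y Hy; auto.
      unfold int_simplex, l1,l2,l3; simpl; lra.
    + apply (Wf_diff f f1 f2 f3); auto; try lra. apply Kpos; lra.
Qed.


Lemma Cl_RInt_der g : Cl g -> forall x, is_derive (fun t => RInt g 0 t) x (g x).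
Proof.
  intros Hg x. apply (is_derive_RInt g (fun x => RInt g 0 x) 0 x).
  + apply filter_forall. intros b0. apply (RInt_correct (V:=R_CompleteNormedModule)).
    apply (ex_RInt_continuous (V:=R_CompleteNormedModule)).
    intros z _. apply Cl_cont; auto.
  + apply Cl_cont; auto.
Qed.

Lemma construct (wp : R -> R) : Cl wp -> exists f, coh1_metric f /\ forall x, minimal_fibre f x <->
  (int_simplex x /\ fst x = snd x /\
   wp (fst x + snd x) * ((fst x + snd x)^3 * (1 - (fst x + snd x))^2) = 2 - 3*(fst x + snd x)).
Proof.
  intros Hwp.
  set (W0 := fun t => RInt wp 0 t).
  assert (CW0 : Cl W0) by (apply Cl_int; auto).
  assert (CnW0 : Cl (fun t => - W0 t)).
  { apply Cl_ext with (fun t => (-1) * W0 t). apply Cl_mult; [apply Cl_const|auto]. intros; ring. }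
  destruct (continuity_ab_maj (fun t => - W0 t) 0 1 ltac:(lra)) as [m [Hm _]].
  { intros c _. apply continuity_pt_filterlim. apply (Cl_cont _ CnW0). }
  set (Kc := Rmax 0 (- W0 m)).
  set (w := fun t => W0 t + Kc).
  assert (Cw : Cl w) by (apply Cl_plus; auto; apply Cl_const).
  assert (wpos : forall t, 0 <= t <= 1 -> 0 <= w t).
  { intros t Ht. specialize (Hm t Ht). unfold w, Kc. pose proof (Rmax_r 0 (- W0 m)). lra. }
  set (q := fun t => t * w t).
  assert (Cq : Cl q) by (apply Cl_mult; auto; apply Cl_id).
  set (F1 := fun t => RInt q 0 t).
  assert (CF1 : Cl F1) by (apply Cl_int; auto).
  set (f := fun t => RInt F1 0 t).
  assert (Cf : Cl f) by (apply Cl_int; auto).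
  assert (Dw : forall t, is_derive w t (wp t)).
  { intros t. unfold w. replace (wp t) with (wp t + 0) by ring.
    apply (is_derive_plus W0 (fun _ => Kc)). apply Cl_RInt_der; auto.
    auto_derive; auto. }
  assert (Dq : forall t, is_derive q t (w t + t * wp t)).
  { intros t. unfold q. replace (w t + t * wp t) with (1 * w t + t * wp t) by ring.
    apply (is_derive_mult (fun t => t) w). auto_derive; auto. auto. intros; apply Rmult_comm. }
  assert (D : derivs f F1 q (fun t => w t + t * wp t)).
  { intros t _. split; [|split]. apply Cl_RInt_der; auto. apply Cl_RInt_der; auto. auto. }
  assert (Kpos : forall t, 0 < t < 1 -> 0 < Kf q t).
  { intros t Ht. assert (E : Kf q t = (1 + t^2 * (1-t) * w t) / (1 - t)).
    { unfold Kf, q. field. lra. }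
    rewrite E. apply Rdiv_lt_0_compat; [|lra].
    assert (0 <= t^2 * (1-t) * w t).
    { apply Rmult_le_pos. apply Rmult_le_pos. apply pow2_ge_0. lra. apply wpos; lra. }
    lra. }
  exists f. split.
  - split.
    + exists 1. split. lra. intros n t _. apply Cl_smooth; auto.
    + intros [a b] Hx. apply (posdef_iff f F1 q (fun t => w t + t * wp t)); auto.
      destruct Hx as [Ha [Hb Hc]]. unfold l1,l2,l3 in *; simpl in *. apply Kpos; lra.
  - intros x. rewrite (min_iff f F1 q (fun t => w t + t * wp t) x D Kpos).
    split; intros [Hint [Hd Hz]]; split; auto; split; auto;
    destruct Hint as [Ha [Hb Hc]]; unfold l1,l2,l3 in *;
    assert (Ht0 : 0 < fst x + snd x < 1) by lra;
    set (t := fst x + snd x) in *;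
    assert (E : (2 * Kf q t - t * Kd q (fun t => w t + t * wp t) t) * (1-t)^2 = 2 - 3*t - wp t * (t^3 * (1-t)^2))
      by (unfold Kf, Kd, q; field; lra).
    + rewrite Hz in E. lra.
    + rewrite Hz in E. replace (2 - 3 * t - (2 - 3 * t)) with 0 in E by ring.
      apply Rmult_integral in E. destruct E as [E|E]; auto.
      exfalso. assert (0 < (1-t)^2) by (apply pow2_pos; lra). lra.
Qed.


Definition An (h : R -> R) (t0 : R) : Prop :=
  exists r : R, 0 < r /\ exists c : nat -> R,
    forall y : R, Rabs (y - t0) < r -> is_pseries c (y - t0) (h y).

Lemma An_ext h k t0 : An h t0 -> (forall y, h y = k y) -> An k t0.
Proof. intros [r [Hr [c Hc]]] E. exists r; split; auto. exists c. intros y Hy. rewrite <- E. auto. Qed.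

Definition cst_ps (c : R) (n : nat) : R := match n with O => c | S _ => 0 end.

Lemma is_pseries_cst c z : is_pseries (cst_ps c) z c.
Proof.
  unfold is_pseries, is_series.
  apply filterlim_ext with (fun _ => c).
  - intros n. induction n. rewrite sum_O. cbn. ring.
    rewrite sum_Sn, <- IHn. cbn. ring.
  - apply filterlim_const.
Qed.

Lemma An_const c t0 : An (fun _ => c) t0.
Proof. exists 1. split. lra. exists (cst_ps c). intros y _. apply is_pseries_cst. Qed.

Lemma An_plus h k t0 : An h t0 -> An k t0 -> An (fun y => h y + k y) t0.
Proof.
  intros [r1 [Hr1 [c1 H1]]] [r2 [Hr2 [c2 H2]]].
  exists (Rmin r1 r2). split. apply Rmin_glb_lt; auto.
  exists (PS_plus c1 c2). intros y Hy.
  apply (is_pseries_plus c1 c2 (y - t0) (h y) (k y)).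
  apply H1. pose proof (Rmin_l r1 r2); lra. apply H2. pose proof (Rmin_r r1 r2); lra.
Qed.

Lemma An_scal a h t0 : An h t0 -> An (fun y => a * h y) t0.
Proof.
  intros [r [Hr [c H]]]. exists r. split; auto. exists (PS_scal a c). intros y Hy.
  apply (is_pseries_scal a c (y - t0) (h y)). apply Rmult_comm. auto.
Qed.

Lemma An_muly h t0 : An h t0 -> An (fun y => y * h y) t0.
Proof.
  intros Hh. apply An_ext with (fun y => (t0 * h y) + ((y - t0) * h y)).
  2:{ intros; ring. }
  apply An_plus. apply An_scal; auto.
  destruct Hh as [r [Hr [c H]]]. exists r. split; auto. exists (PS_incr_1 c). intros y Hy.
  apply (is_pseries_incr_1 c (y - t0) (h y)). auto.
Qed.

Lemma conv_radius (c : nat -> R) r : (forall z, Rabs z < r -> ex_pseries c z) ->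
  forall z, Rabs z < r -> Rbar_lt (Rabs z) (CV_radius c).
Proof.
  intros Hc z Hz. set (z' := (Rabs z + r) / 2).
  assert (Hz' : Rabs z < z' < r) by (unfold z'; lra).
  assert (Ha : Rabs z' = z') by (apply Rabs_pos_eq; pose proof (Rabs_pos z); lra).
  apply Rbar_lt_le_trans with (Finite z'). simpl; lra.
  apply Rbar_not_lt_le. intros Hlt. rewrite <- Ha in Hlt.
  apply (CV_disk_outside c z' Hlt).
  assert (Hl := Hc z' ltac:(rewrite Ha; lra)).
  apply ex_series_lim_0 in Hl.
  eapply is_lim_seq_ext; [|exact Hl]. intros n. simpl. rewrite <- pow_n_pow. unfold scal; simpl. unfold mult; simpl. apply Rmult_comm.
Qed.

Lemma An_radius h t0 r c : (forall y, Rabs (y - t0) < r -> is_pseries c (y - t0) (h y)) ->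
  forall y, Rabs (y - t0) < r -> Rbar_lt (Rabs (y - t0)) (CV_radius c).
Proof.
  intros H y Hy. apply (conv_radius c r); auto.
  intros z Hz. exists (h (z + t0)). 
  assert (E : z = z + t0 - t0) by ring. 
  assert (Hz' : Rabs (z + t0 - t0) < r) by (rewrite <- E; auto).
  pose proof (H (z + t0) Hz') as H'. rewrite <- E in H'. exact H'.
Qed.

Lemma An_Derive h t0 : An h t0 -> An (Derive h) t0.
Proof.
  intros [r [Hr [c H]]]. exists r. split; auto. exists (PS_derive c). intros y Hy.
  assert (HR := An_radius h t0 r c H y Hy).
  assert (E : Derive h y = PSeries (PS_derive c) (y - t0)).
  { rewrite (Derive_ext_loc h (fun u => PSeries c (u - t0))).
    - apply is_derive_unique.
      replace (PSeries (PS_derive c) (y - t0)) with (scal (1:R) (PSeries (PS_derive c) (y - t0)))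
        by (unfold scal; simpl; unfold mult; simpl; ring).
      apply (is_derive_comp (PSeries c) (fun u => u - t0) y).
      + replace (PSeries (PS_derive c) (y - t0)) with (PSeries (PS_derive c) ((fun u => u - t0) y)) by reflexivity.
        apply is_derive_PSeries. exact HR.
      + auto_derive; auto. 
    - apply Rabs_def2 in Hy.
      eapply filter_imp; [|apply (loc_int (t0 - r) (t0 + r) y); lra].
      intros u Hu. symmetry. apply is_pseries_unique. apply H. apply Rabs_def1; lra. }
  rewrite E. apply PSeries_correct. apply ex_pseries_derive. exact HR.
Qed.

Lemma CV_radius_decr_n (a : nat -> R) k : CV_radius (PS_decr_n a k) = CV_radius a.
Proof.
  induction k. apply CV_radius_ext. intros n. reflexivity.
  rewrite <- IHk. rewrite <- (CV_radius_decr_1 (PS_decr_n a k)). apply CV_radius_ext.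
  intros n. unfold PS_decr_n, PS_decr_1. f_equal. lia.
Qed.

Lemma min_nat (P : nat -> Prop) : (exists n, P n) -> exists k, P k /\ forall i, (i < k)%nat -> ~ P i.
Proof.
  intros [n Hn]. revert Hn. induction n as [n IH] using (well_founded_induction Wf_nat.lt_wf). intros Hn.
  destruct (classic (exists i, (i < n)%nat /\ P i)) as [[i [Hi Pi]]|Hno].
  - apply (IH i Hi Pi).
  - exists n. split; auto. intros i Hi Pi. apply Hno. exists i; auto.
Qed.

Lemma An_dichot h t0 : An h t0 ->
  (exists d, 0 < d /\ forall y, Rabs (y - t0) < d -> h y = 0) \/
  (exists d, 0 < d /\ forall y, 0 < Rabs (y - t0) < d -> h y <> 0).
Proof.
  intros [r [Hr [c H]]].
  destruct (classic (forall n, c n = 0)) as [Z|NZ].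
  - left. exists r. split; auto. intros y Hy. rewrite <- (is_pseries_unique _ _ _ (H y Hy)).
    rewrite (PSeries_ext c (fun _ => 0)); auto. apply PSeries_const_0.
  - right. apply not_all_ex_not in NZ.
    destruct (min_nat (fun n => c n <> 0) NZ) as [k [Hk Hmin]].
    assert (HR0 : Rbar_lt (Rabs 0) (CV_radius (PS_decr_n c k))).
    { rewrite CV_radius_decr_n. replace 0 with (t0 - t0) by ring. apply (An_radius h t0 r c H t0).
      replace (t0 - t0) with 0 by ring. rewrite Rabs_R0; auto. }
    assert (Hcont := PSeries_continuity _ _ HR0).
    assert (Hg0 : PSeries (PS_decr_n c k) 0 <> 0).
    { rewrite PSeries_0. unfold PS_decr_n. rewrite Nat.add_0_r. auto. }
    destruct (Hcont (Rabs (PSeries (PS_decr_n c k) 0))) as [d [Hd Hd']].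
    { apply Rabs_pos_lt; auto. }
    exists (Rmin d r). split. apply Rmin_glb_lt; auto.
    intros y [Hy1 Hy2].
    assert (Hyr : Rabs (y - t0) < r) by (pose proof (Rmin_r d r); lra).
    rewrite <- (is_pseries_unique _ _ _ (H y Hyr)).
    rewrite (PSeries_decr_n_aux c k).
    2:{ intros i Hi. apply NNPP. intros Hc. apply (Hmin i Hi Hc). }
    apply Rmult_integral_contrapositive_currified.
    + apply pow_nonzero. intros E. rewrite E, Rabs_R0 in Hy1. lra.
    + intros E. 
      assert (Hdist : R_dist (y - t0) 0 < d).
      { unfold R_dist. rewrite Rminus_0_r. pose proof (Rmin_l d r); lra. }
      assert (Hx : D_x no_cond 0 (y - t0)).
      { split. exact I. intros E0. rewrite <- E0, Rabs_R0 in Hy1. lra. }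
      specialize (Hd' (y - t0) (conj Hx Hdist)). simpl in Hd'. unfold R_dist in Hd'.
      rewrite E in Hd'. rewrite Rminus_0_l, Rabs_Ropp in Hd'. lra.
Qed.

Lemma avoid_list (L : list R) : forall c d, c < d -> exists y, c < y < d /\ ~ In y L.
Proof.
  induction L as [|x L IH]; intros c d Hcd.
  - exists ((c+d)/2). split. lra. simpl; auto.
  - destruct (Rle_dec x c) as [Hx|Hx].
    + destruct (IH c d Hcd) as [y [Hy Hn]]. exists y. split; auto. simpl. intros [E|E]; [lra|auto].
    + destruct (Rle_dec d x) as [Hx'|Hx'].
      * destruct (IH c d Hcd) as [y [Hy Hn]]. exists y. split; auto. simpl. intros [E|E]; [lra|auto].
      * destruct (IH c x ltac:(lra)) as [y [Hy Hn]]. exists y. split. lra. simpl. intros [E|E]; [lra|auto].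
Qed.

Lemma finite_zeros h : (forall t, 0 <= t <= 1 -> An h t) -> h 0 <> 0 ->
  exists L : list R, forall t, 0 <= t <= 1 -> h t = 0 -> In t L.
Proof.
  intros HA H0.
  set (A := fun a => 0 <= a <= 1 /\ exists L : list R, forall t, 0 <= t <= a -> h t = 0 -> In t L).
  assert (A0 : A 0).
  { split. lra. exists nil. intros t Ht Hz. assert (t = 0) by lra. subst. contradiction. }
  assert (Hb : bound A). { exists 1. intros a [Ha _]. lra. }
  destruct (completeness A Hb (ex_intro _ 0 A0)) as [s [Hub Hlub]].
  assert (Hs0 : 0 <= s) by (apply Hub; auto).
  assert (Hs1 : s <= 1). { apply Hlub. intros a [Ha _]. lra. }
  assert (Happ : forall e, 0 < e -> exists a, A a /\ s - e < a).
  { intros e He. apply NNPP. intros Hno.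
    assert (s <= s - e). { apply Hlub. intros a Ha. apply Rnot_lt_le. intros Hlt. apply Hno. exists a; split; auto. }
    lra. }
  destruct (An_dichot h s (HA s ltac:(lra))) as [[d [Hd Hz]]|[d [Hd Hnz]]].
  - exfalso. destruct (Req_dec s 0) as [E|E].
    + apply H0. apply Hz. rewrite E. replace (0 - 0) with 0 by ring. rewrite Rabs_R0. lra.
    + destruct (Happ (Rmin d s) ltac:(apply Rmin_glb_lt; lra)) as [a [[Ha [L HL]] Has]].
      assert (Has' : a <= s) by (apply Hub; split; auto; exists L; auto).
      pose proof (Rmin_l d s). pose proof (Rmin_r d s).
      destruct (avoid_list L (Rmax (s - d) 0) a) as [y [Hy Hny]].
      { apply Rmax_lub_lt; lra. }
      apply Hny. pose proof (Rmax_l (s-d) 0). pose proof (Rmax_r (s-d) 0).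
      apply HL. lra. apply Hz. apply Rabs_def1; lra.
  - destruct (Happ d Hd) as [a [[Ha [L HL]] Has]].
    assert (Ab : A (Rmin 1 (s + d/2))).
    { split. split. apply Rmin_glb; lra. apply Rmin_l.
      exists (s :: L). intros t Ht Htz. simpl.
      destruct (Rle_dec t a) as [Hta|Hta]. right. apply HL; auto; lra.
      destruct (Req_dec t s) as [E|E]. left; auto.
      exfalso. apply (Hnz t); auto. split. apply Rabs_pos_lt. lra.
      pose proof (Rmin_r 1 (s + d/2)). apply Rabs_def1; lra. }
    assert (Hle : Rmin 1 (s + d/2) <= s) by (apply Hub; auto).
    destruct (Rle_dec 1 (s + d/2)) as [H1|H1].
    + rewrite Rmin_left in Ab by lra. destruct Ab as [_ [L' HL']]. exists L'. auto.
    + rewrite Rmin_right in Hle by lra. lra.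
Qed.


Lemma smooth_derivs f eps : 0 < eps -> smooth_on f (- eps) (1 + eps) ->
  derivs f (Derive f) (Derive (Derive f)) (Derive (Derive (Derive f))).
Proof.
  intros He Hs t Ht.
  assert (Ht' : - eps < t < 1 + eps) by lra.
  pose proof (Hs 1%nat t Ht') as H1. pose proof (Hs 2%nat t Ht') as H2. pose proof (Hs 3%nat t Ht') as H3.
  simpl in H1, H2, H3.
  split; [|split]; apply Derive_correct.
  - exact H1.
  - eapply ex_derive_ext; [|exact H2]. intros; reflexivity.
  - eapply ex_derive_ext; [|exact H3]. intros. apply Derive_ext. intros; reflexivity.
Qed.

Lemma metric_Kpos f : coh1_metric f ->
  exists eps, 0 < eps /\ derivs f (Derive f) (Derive (Derive f)) (Derive (Derive (Derive f))) /\
  (forall t, 0 < t < 1 -> 0 < Kf (Derive (Derive f)) t).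
Proof.
  intros [[eps [He Hs]] Hp]. exists eps. split; auto.
  assert (D := smooth_derivs f eps He Hs). split; auto.
  intros t Ht.
  assert (Hint : int_simplex (t/2, t/2)) by (unfold int_simplex, l1,l2,l3; simpl; lra).
  pose proof (proj1 (posdef_iff _ _ _ _ _ _ D Hint) (Hp _ Hint)) as K.
  replace (t/2 + t/2) with t in K by field. exact K.
Qed.

Lemma part_a : forall f : R -> R, coh1_metric f ->
     forall x : R * R, minimal_fibre f x -> on_diagonal x.
Proof.
  intros f Hm x Hx. destruct (metric_Kpos f Hm) as [eps [He [D Kp]]].
  apply (min_iff _ _ _ _ x D Kp) in Hx. destruct Hx as [_ [H _]]. exact H.
Qed.

Lemma part_b : forall f : R -> R, coh1_metric f -> coh1_analytic f ->
     exists ps : list (R * R), forall x : R * R, minimal_fibre f x -> List.In x ps.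
Proof.
  intros f Hm [ea [Hea Ha]]. destruct (metric_Kpos f Hm) as [eps [He [D Kp]]].
  set (f2 := Derive (Derive f)). set (f3 := Derive f2).
  set (M := fun t => 2 - 3*t + (1-t)^2 * (t * f2 t - t^2 * f3 t)).
  assert (AM : forall t, 0 <= t <= 1 -> An M t).
  { intros t Ht. assert (Af : An f t) by (apply Ha; lra).
    assert (A2 : An f2 t) by (apply An_Derive, An_Derive; auto).
    assert (A3 : An f3 t) by (apply An_Derive; auto).
    set (X := fun y => y * f2 y + (-1) * (y * (y * f3 y))).
    assert (AX : An X t).
    { apply An_plus. apply An_muly; auto. apply An_scal. apply An_muly, An_muly; auto. }
    apply An_ext with (fun y => (2 + (-3) * (y * 1)) + (X y + (-2) * (y * X y) + (y * (y * X y)))).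
    - apply An_plus. apply An_plus. apply An_const. apply An_scal, An_muly, An_const.
      apply An_plus. apply An_plus. auto. apply An_scal, An_muly; auto. apply An_muly, An_muly; auto.
    - intros y. unfold M, X. ring. }
  assert (M0 : M 0 <> 0) by (unfold M; replace (2 - 3 * 0 + (1 - 0) ^ 2 * (0 * f2 0 - 0 ^ 2 * f3 0)) with 2 by ring; lra).
  destruct (finite_zeros M AM M0) as [L HL].
  exists (map (fun t => (t/2, t/2)) L). intros x Hx.
  apply (min_iff _ _ _ _ x D Kp) in Hx. destruct x as [a b]. simpl in Hx.
  destruct Hx as [[Ha0 [Hb0 Hc0]] [Hab Hz]]. unfold l1,l2,l3 in *; simpl in *. subst b.
  apply in_map_iff. exists (a + a). split. f_equal; field.
  apply HL. lra.
  assert (E : M (a+a) = (1 - (a+a))^2 * (2 * Kf f2 (a + a) - (a + a) * Kd f2 f3 (a + a))).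
  { unfold M, Kf, Kd. field. lra. }
  rewrite E. unfold f3, f2 in *. rewrite Hz. ring.
Qed.

Lemma no_inj_list (g : R -> R * R) (ps : list (R * R)) :
  (forall s t, g s = g t -> s = t) -> (forall s, In (g s) ps) -> False.
Proof.
  intros Hinj Hin.
  set (l := map (fun k => g (INR k)) (seq 0 (S (length ps)))).
  assert (Hnd : NoDup l).
  { apply Injective_map_NoDup. intros a b E. apply INR_eq. apply Hinj. exact E. apply seq_NoDup. }
  assert (Hinc : incl l ps). { intros y Hy. unfold l in Hy. apply in_map_iff in Hy. destruct Hy as [k [<- _]]. auto. }
  pose proof (NoDup_incl_length Hnd Hinc) as Hlen. unfold l in Hlen. rewrite length_map, length_seq in Hlen. lia.
Qed.

Definition p5 (t : R) : R := t*t*t*((1-t)*(1-t)).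
Lemma Cl_p5 : Cl p5.
Proof.
  unfold p5. assert (C1 : Cl (fun t => 1 - t)).
  { apply Cl_ext with (fun t => 1 + (-1) * t). apply Cl_plus. apply Cl_const. apply Cl_mult. apply Cl_const. apply Cl_id. intros; ring. }
  repeat apply Cl_mult; auto; apply Cl_id.
Qed.
Lemma p5_pos t : 0 < t < 1 -> 0 < p5 t.
Proof. intros H. unfold p5. assert (0 < 1 - t) by lra. repeat apply Rmult_lt_0_compat; lra. Qed.

Definition Dfun (chi : R -> R) (t : R) : R := chi t * p5 t + (1 - chi t).

Lemma Dfun_pos chi : (forall t, 0 <= chi t <= 1) -> (forall t, (t <= 0 \/ 1 <= t) -> chi t = 0) ->
  forall t, 0 < Dfun chi t.
Proof.
  intros Hb Hz t. unfold Dfun. destruct (Rlt_dec 0 t) as [H1|H1]; [destruct (Rlt_dec t 1) as [H2|H2]|].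
  - pose proof (p5_pos t (conj H1 H2)). pose proof (Hb t). nra.
  - rewrite Hz by lra. lra.
  - rewrite Hz by lra. lra.
Qed.

Lemma Cl_Dfun chi : Cl chi -> Cl (Dfun chi).
Proof.
  intros C. unfold Dfun. apply Cl_plus. apply Cl_mult; auto. apply Cl_p5.
  apply Cl_ext with (fun t => 1 + (-1) * chi t). apply Cl_plus. apply Cl_const. apply Cl_mult; auto. apply Cl_const. intros; ring.
Qed.

Definition chic := Bm (1/16) (1/8) (5/8) (3/4).
Definition wpc (t : R) : R := Bm (1/8) (1/4) (1/2) (5/8) t * ((2 - 3*t) * / Dfun chic t).

Lemma Cl_wpc : Cl wpc.
Proof.
  unfold wpc. apply Cl_mult. apply Cl_Bm. apply Cl_mult.
  - apply Cl_ext with (fun t => 2 + (-3) * t). apply Cl_plus. apply Cl_const. apply Cl_mult. apply Cl_const. apply Cl_id. intros; ring.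
  - apply Cl_inv. apply Cl_Dfun. apply Cl_Bm.
    intros t. apply Rgt_not_eq. apply Dfun_pos. intros; apply Bm_bnd.
    intros s Hs. apply Bm_0; lra.
Qed.

Lemma part_c : exists f : R -> R, coh1_metric f /\ ~ coh1_analytic f /\
     exists g : R -> R * R,
       (forall s t : R, g s = g t -> s = t) /\
       (forall s : R, minimal_fibre f (g s)).
Proof.
  destruct (construct wpc Cl_wpc) as [f [Hm Hiff]].
  set (g := fun s => (3/16 + atan s / 32, 3/16 + atan s / 32)).
  assert (Ginj : forall s t, g s = g t -> s = t).
  { intros s t E. unfold g in E. injection E. intros E1 _.
    assert (Ea : atan s = atan t) by lra.
    destruct (Rtotal_order s t) as [H|[H|H]]; auto.
    apply atan_increasing in H. lra. apply atan_increasing in H. lra. }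
  assert (Gmin : forall s, minimal_fibre f (g s)).
  { intros s. apply Hiff. unfold g; simpl.
    pose proof (atan_bound s). pose proof PI_4.
    assert (Hs1 : -1/8 < atan s / 16 < 1/8).
    { split; apply (Rmult_lt_reg_r 16); try lra; field_simplify; lra. }
    set (t := 3 / 16 + atan s / 32 + (3 / 16 + atan s / 32)).
    assert (Ht : 1/4 <= t <= 1/2) by (unfold t; lra).
    split. unfold int_simplex, l1, l2, l3; simpl; lra. split; auto.
    unfold wpc. rewrite Bm_1 by lra. unfold Dfun, chic. rewrite Bm_1 by lra.
    assert (0 < p5 t) by (apply p5_pos; lra).
    unfold p5. field. unfold p5 in H1. lra. }
  exists f. split; auto. split.
  - intros Han. destruct (part_b f Hm Han) as [ps Hps].
    apply (no_inj_list g ps Ginj). intros s. apply Hps. apply Gmin.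
  - exists g. split; auto.
Qed.

Lemma fold_min_le (l : list R) d x : In x l -> fold_right Rmin d l <= x.
Proof.
  induction l; simpl. intros []. intros [E|H]. subst. apply Rmin_l.
  eapply Rle_trans. apply Rmin_r. auto.
Qed.
Lemma fold_min_d (l : list R) d : fold_right Rmin d l <= d.
Proof. induction l; simpl. lra. eapply Rle_trans. apply Rmin_r. auto. Qed.
Lemma fold_min_pos (l : list R) d : 0 < d -> (forall x, In x l -> 0 < x) -> 0 < fold_right Rmin d l.
Proof.
  induction l; simpl; intros Hd Hl; auto. apply Rmin_glb_lt. apply Hl; auto. apply IHl; auto.
Qed.

Definition Pi (ps : list (R * R)) (t : R) : R := fold_right (fun p acc => (t - 2 * fst p)^2 * acc) 1 ps.

Lemma Cl_Pi ps : Cl (Pi ps).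
Proof.
  induction ps as [|p ps IH]; simpl.
  - apply Cl_ext with (fun _ => 1). apply Cl_const. intros; reflexivity.
  - apply Cl_ext with (fun t => (t - 2 * fst p)^2 * Pi ps t); [|intros; reflexivity]. apply Cl_mult; auto.
    apply Cl_ext with (fun t => (t + (- 2 * fst p)) * ((t + (- 2 * fst p)) * 1)).
    apply Cl_mult. apply Cl_plus. apply Cl_id. apply Cl_const.
    apply Cl_mult. apply Cl_plus. apply Cl_id. apply Cl_const. apply Cl_const.
    intros; ring.
Qed.

Lemma Pi_nonneg ps t : 0 <= Pi ps t.
Proof. induction ps; unfold Pi in *; simpl. lra. apply Rmult_le_pos; auto. apply pow2_ge_0. Qed.

Lemma Pi_zero ps t : Pi ps t = 0 -> exists p, In p ps /\ t = 2 * fst p.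
Proof.
  induction ps as [|p ps IH]; unfold Pi; simpl; intros H. lra.
  apply Rmult_integral in H. destruct H as [H|H].
  - exists p. split; auto. assert (t - 2 * fst p = 0). { apply NNPP. intros Hn. apply (pow_nonzero _ 2 Hn). auto. } lra.
  - destruct (IH H) as [q [Hq Et]]. exists q; auto.
Qed.

Lemma Pi_root ps p : In p ps -> Pi ps (2 * fst p) = 0.
Proof.
  induction ps as [|q ps IH]; intros H. contradiction.
  change (Pi (q::ps) (2 * fst p)) with ((2*fst p - 2*fst q)^2 * Pi ps (2 * fst p)).
  destruct H as [E|H]. subst q. replace (2 * fst p - 2 * fst p) with 0 by ring. ring.
  rewrite IH; auto. ring.
Qed.

Definition mu (ps : list (R * R)) := fold_right Rmin (1/3) (map fst ps).
Definition nu (ps : list (R * R)) := fold_right Rmin (1/6) (map (fun p => 1 - 2 * fst p) ps).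
Definition betad ps := Bm (mu ps / 2) (mu ps) (1 - nu ps / 2) (1 - nu ps / 4).
Definition chid ps := Bm (mu ps / 4) (mu ps / 2) (1 - nu ps / 4) (1 - nu ps / 8).
Definition wpd ps t0 t := betad ps t * ((2 - 3*t) * / Dfun (chid ps) t + (t - t0) * Pi ps t).

Lemma part_d : forall ps : list (R * R), ps <> nil ->
     (forall p : R * R, List.In p ps -> int_simplex p /\ on_diagonal p) ->
     exists f : R -> R, coh1_metric f /\
       forall x : R * R, minimal_fibre f x <-> List.In x ps.
Proof.
  intros ps Hne Hps.
  assert (Hmu0 : 0 < mu ps).
  { apply fold_min_pos. lra. intros y Hy. apply in_map_iff in Hy. destruct Hy as [p [<- Hp]].
    destruct (Hps p Hp) as [[H1 _] _]. exact H1. }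
  assert (Hmu1 : mu ps <= 1/3) by apply fold_min_d.
  assert (Hmup : forall p, In p ps -> mu ps <= fst p).
  { intros p Hp. apply fold_min_le. apply in_map; auto. }
  assert (Hnu0 : 0 < nu ps).
  { apply fold_min_pos. lra. intros y Hy. apply in_map_iff in Hy. destruct Hy as [p [<- Hp]].
    destruct (Hps p Hp) as [[H1 [H2 H3]] Hd]. unfold l1,l2,l3,on_diagonal in *. lra. }
  assert (Hnu1 : nu ps <= 1/6) by apply fold_min_d.
  assert (Hnup : forall p, In p ps -> nu ps <= 1 - 2 * fst p).
  { intros p Hp. apply (fold_min_le _ _ (1 - 2 * fst p)). apply (in_map (fun p => 1 - 2 * fst p)); auto. }
  destruct ps as [|p0 ps']. contradiction.
  set (ps := p0 :: ps') in *.
  set (t0 := 2 * fst p0).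
  assert (Ht0 : mu ps <= t0 / 2 /\ nu ps <= 1 - t0).
  { unfold t0. split. pose proof (Hmup p0 (or_introl eq_refl)). lra. apply Hnup. left; auto. }
  assert (Dpos : forall t, 0 < Dfun (chid ps) t).
  { apply Dfun_pos. intros; apply Bm_bnd. intros t Ht. unfold chid. apply Bm_0; lra. }
  assert (Cw : Cl (wpd ps t0)).
  { unfold wpd. apply Cl_mult. apply Cl_Bm. apply Cl_plus.
    - apply Cl_mult. 
      apply Cl_ext with (fun t => 2 + (-3) * t). apply Cl_plus. apply Cl_const. apply Cl_mult. apply Cl_const. apply Cl_id. intros; ring.
      apply Cl_inv. apply Cl_Dfun. apply Cl_Bm. intros t. apply Rgt_not_eq. apply Dpos.
    - apply Cl_mult. 
      apply Cl_ext with (fun t => t + (- t0)). apply Cl_plus. apply Cl_id. apply Cl_const. intros; ring.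
      apply Cl_Pi. }
  assert (Weq : forall t, 0 < t < 1 -> wpd ps t0 t = betad ps t * ((2 - 3*t) / p5 t + (t - t0) * Pi ps t)).
  { intros t Ht. unfold wpd. destruct (Req_dec (betad ps t) 0) as [E|E].
    - rewrite E. ring.
    - assert (Hr : mu ps / 2 < t < 1 - nu ps / 4).
      { split; apply Rnot_le_lt; intros Hle; apply E; unfold betad; apply Bm_0; lra. }
      unfold Dfun, chid. rewrite Bm_1 by lra. replace (1 * p5 t + (1 - 1)) with (p5 t) by ring. reflexivity. }
  assert (Key : forall t, 0 < t < 1 -> (wpd ps t0 t * p5 t = 2 - 3*t <-> exists p, In p ps /\ t = 2 * fst p)).
  { intros t Ht. rewrite (Weq t Ht). pose proof (p5_pos t Ht) as Hp5.
    pose proof (Bm_bnd (mu ps / 2) (mu ps) (1 - nu ps / 2) (1 - nu ps / 4) t) as Hb. fold (betad ps t) in Hb.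
    split.
    - intros Heq. destruct (Req_dec (Pi ps t) 0) as [HP|HP]. apply Pi_zero; auto.
      assert (HPp : 0 < Pi ps t) by (pose proof (Pi_nonneg ps t); lra).
      set (rho := (2 - 3*t) / p5 t) in *.
      assert (E1 : betad ps t * (rho + (t - t0) * Pi ps t) = rho).
      { apply (Rmult_eq_reg_r (p5 t)); [|lra]. rewrite Heq. unfold rho. field. lra. }
      assert (E2 : betad ps t * ((t - t0) * Pi ps t) = (1 - betad ps t) * rho) by lra.
      destruct (Rle_dec (mu ps) t) as [H1|H1]; [destruct (Rle_dec t (1 - nu ps / 2)) as [H2|H2]|].
      + assert (B1 : betad ps t = 1) by (unfold betad; apply Bm_1; lra).
        rewrite B1 in E2. replace ((1 - 1) * rho) with 0 in E2 by ring.
        assert (t - t0 = 0).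
        { apply Rmult_integral in E2. destruct E2 as [E2|E2]. lra. apply Rmult_integral in E2. destruct E2; lra. }
        exists p0. split. left; auto. fold t0. lra.
      + exfalso. assert (Hrho : rho < 0).
        { unfold rho. apply (Rmult_lt_reg_r (p5 t)); auto. unfold Rdiv. rewrite Rmult_assoc, Rinv_l by lra. lra. }
        assert (HX : 0 < (t - t0) * Pi ps t) by (apply Rmult_lt_0_compat; lra).
        destruct (Req_dec (betad ps t) 1) as [B1|B1].
        * rewrite B1 in E2. lra.
        * assert (0 <= betad ps t * ((t - t0) * Pi ps t)) by (apply Rmult_le_pos; lra).
          assert (0 < (1 - betad ps t) * (- rho)) by (apply Rmult_lt_0_compat; lra). lra.
      + exfalso. assert (Hrho : 0 < rho).
        { unfold rho. apply Rdiv_lt_0_compat; lra. }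
        assert (HX : 0 < (t0 - t) * Pi ps t) by (apply Rmult_lt_0_compat; lra).
        destruct (Req_dec (betad ps t) 1) as [B1|B1].
        * rewrite B1 in E2. lra.
        * assert (0 <= betad ps t * ((t0 - t) * Pi ps t)) by (apply Rmult_le_pos; lra).
          assert (0 < (1 - betad ps t) * rho) by (apply Rmult_lt_0_compat; lra). lra.
    - intros [p [Hp Et]]. rewrite Et in *.
      assert (B1 : betad ps (2 * fst p) = 1).
      { unfold betad; apply Bm_1; try lra. pose proof (Hmup p Hp). pose proof (Hnup p Hp). lra. }
      rewrite B1, (Pi_root ps p Hp). field. lra. }
  destruct (construct (wpd ps t0) Cw) as [f [Hm Hiff]].
  exists f. split; auto. intros x. rewrite Hiff. split.
  - intros [Hint [Hd Hz]].
    assert (Ht : 0 < fst x + snd x < 1) by (destruct Hint as [H1 [H2 H3]]; unfold l1,l2,l3 in *; lra).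
    assert (Hz' : wpd ps t0 (fst x + snd x) * p5 (fst x + snd x) = 2 - 3 * (fst x + snd x)).
    { rewrite <- Hz. unfold p5. ring. }
    destruct (proj1 (Key _ Ht) Hz') as [p [Hp Et]].
    destruct (Hps p Hp) as [_ Hdp]. unfold on_diagonal in Hdp.
    destruct x as [a b]; destruct p as [c d]. simpl in Hd, Hdp, Et. replace (a, b) with (c, d). exact Hp. f_equal; lra.
  - intros Hx. destruct (Hps x Hx) as [Hint Hd]. unfold on_diagonal in Hd.
    assert (Ht : 0 < fst x + snd x < 1) by (destruct Hint as [H1 [H2 H3]]; unfold l1,l2,l3 in *; lra).
    split; auto. split; auto.
    assert (Hk : exists p, In p ps /\ fst x + snd x = 2 * fst p) by (exists x; split; auto; lra).
    pose proof (proj2 (Key _ Ht) Hk) as Hz. rewrite <- Hz. unfold p5. ring.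
Qed.


Theorem mainTheorem7 :
  (* (a) minimal Lagrangian fibres lie over the on_diagonal *)
  (forall f : R -> R, coh1_metric f ->
     forall x : R * R, minimal_fibre f x -> on_diagonal x) /\
  (* (b) analytic metrics have finitely many minimal Lagrangian fibres *)
  (forall f : R -> R, coh1_metric f -> coh1_analytic f ->
     exists ps : list (R * R), forall x : R * R, minimal_fibre f x -> List.In x ps) /\
  (* (c) a non-analytic metric with a continuum of minimal fibres *)
  (exists f : R -> R, coh1_metric f /\ ~ coh1_analytic f /\
     exists g : R -> R * R,
       (forall s t : R, g s = g t -> s = t) /\
       (forall s : R, minimal_fibre f (g s))) /\
  (* (d) prescribing any nonempty finite set in int P on the on_diagonal *)
  (forall ps : list (R * R), ps <> nil ->
     (forall p : R * R, List.In p ps -> int_simplex p /\ on_diagonal p) ->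
     exists f : R -> R, coh1_metric f /\
       forall x : R * R, minimal_fibre f x <-> List.In x ps).
Proof.
  split; [exact part_a|]. split; [exact part_b|]. split; [exact part_c|]. exact part_d.
Qed.
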